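(* Let $V,W$ be finite-dimensional real vector spaces and let $A(\xi):V\to W$ be a homogeneous symbol on $\mathbb{R}^d$ (matrix entries homogeneous polynomials of a common degree with real coefficients). Denote by $A(\xi)_{\mathbb C}:V_{\mathbb C}\to W_{\mathbb C}$ its complexification, regarded as a polynomial in complex variables $\xi\in\mathbb{C}^d$. The following are equivalent: (1) $\operatorname{rank}_{\mathbb C}A(\xi)_{\mathbb C}$ is constant on $\mathbb{C}^d\setminus\{0\}$; (2) there exist finite-dimensional real vector spaces $U,X$ and homogeneous symbols $B(\xi):U\to V$, $Q(\xi):W\to X$ on $\mathbb{R}^d$ with real coefficients, forming a symbol complex $U\xrightarrow{B(\xi)}V\xrightarrow{A(\xi)}W\xrightarrow{Q(\xi)}X$, such that $$\operatorname{im}B(\xi)_{\mathbb C}=\ker A(\xi)_{\mathbb C}\quad\text{and}\quad \operatorname{im}A(\xi)_{\mathbb C}=\ker Q(\xi)_{\mathbb C}\qquad\text{for all }\xi\in\mathbb{C}^d\setminus\{0\}.$$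
   Context: For a real vector space $V$, $V_{\mathbb C}=\mathbb{C}\otimes_{\mathbb R}V=V\oplus iV$; for a real linear map $f:V\to W$, $f_{\mathbb C}(v_1+iv_2)=f(v_1)+if(v_2)$. The complexification of a symbol $A(\xi)$ on $\mathbb{R}^d$ is $A(\xi)_{\mathbb C}$, with the polynomial entries evaluated at complex $\xi$. *)

(* Defs.v *)
From HB Require Import structures.
From mathcomp Require Import all_boot all_order all_algebra.
From mathcomp Require Import mpoly.
From mathcomp Require Import complex.
From mathcomp Require Import reals.
Set Implicit Arguments. Unset Strict Implicit. Unset Printing Implicit Defensive.
Import Order.TTheory GRing.Theory Num.Theory.
Local Open Scope ring_scope.

(* Convention: linear maps act on ROW vectors (mathcomp's
   convention), so a map V -> W with dim V = n, dim W = m is an n x m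
   matrix M, acting by x |-> x *m M.  Composition "first B then A" is B *m A. *)
Definition symbol (R : realType) (d n m : nat) := 'M[{mpoly R[d]}]_(n, m).

Definition homogeneous_symbol (R : realType) (d n m : nat) (A : symbol R d n m) :=
  exists k : nat, forall i j, A i j \is k.-homog.

Definition csymbol (R : realType) (d n m : nat) (A : symbol R d n m)
  (xi : 'I_d -> complex R) : 'M[complex R]_(n, m) :=
  \matrix_(i, j) mmap (fun r : R => (r%:C)%C) xi (A i j).

(* Main.v *)
Require Import Defs.
From HB Require Import structures.
From mathcomp Require Import all_boot all_order all_algebra.
From mathcomp Require Import mpoly perm.
From mathcomp Require Import complex.
From mathcomp Require Import reals.
From Stdlib Require Import Classical Lia FunctionalExtensionality.
From mathcomp Require Import zify.
Import Order.TTheory GRing.Theory Num.Theory.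
Set Implicit Arguments. Unset Strict Implicit. Unset Printing Implicit Defensive.
Local Open Scope ring_scope.

Lemma poly_allroot_eq0 (R : realType) (q : {poly R}) :
  (forall t, q.[t] = 0) -> q = 0.
Proof.
move=> h; apply: (@roots_geq_poly_eq0 _ q [seq i%:R | i <- iota 0 (size q)]).
- by apply/allP=> x _; rewrite /root h.
- rewrite map_inj_uniq ?iota_uniq //; exact: (mulrIn (oner_neq0 R)).
- by rewrite size_map size_iota.
Qed.

Lemma mmap_rmorph n (R : nzRingType) (S T : comNzRingType) (f : R -> S)
  (h : 'I_n -> S) (phi : {rmorphism S -> T}) (p : {mpoly R[n]}) :
  phi (mmap f h p) = mmap (phi \o f) (phi \o h) p.
Proof.
rewrite /mmap rmorph_sum; apply: eq_bigr => m _.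
rewrite rmorphM /mmap1 rmorph_prod; congr (_ * _).
by apply: eq_bigr => i _; rewrite rmorphXn.
Qed.

Lemma eq_mmap n (R S : nzRingType) (f1 f2 : R -> S) (h : 'I_n -> S) p :
  f1 =1 f2 -> mmap f1 h p = mmap f2 h p.
Proof. by move=> e; rewrite /mmap; apply: eq_bigr => m _; rewrite e. Qed.

Lemma muni_coef (R : nzRingType) n (p : {mpoly R[n.+1]}) (m : 'X_{1..n.+1}) :
  ((muni p)`_(m ord_max))@_[multinom (m (widen_ord (leqnSn _) i)) | i < n] = p@_m.
Proof.
rewrite muniE coef_sum (raddf_sum (mcoeff _)).
transitivity (\sum_(k <- msupp p) p@_k * (k == m)%:R); last first.
  by rewrite {3}(mpolyE p) (raddf_sum (mcoeff m)); apply: eq_bigr => k _ /=; rewrite mcoeffZ mcoeffX.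
apply: eq_bigr => k _.
rewrite coefZ coefXn.
have -> : (k == m) = ((m ord_max == k ord_max) &&
   ([multinom (k (widen_ord (leqnSn _) i)) | i < n] ==
    [multinom (m (widen_ord (leqnSn _) i)) | i < n])).
  apply/eqP/andP => [->|[/eqP e1 /eqP e2]]; first by split.
  apply/mnmP => i; case: (unliftP ord_max i) => [i' ->|->] //.
  have := congr1 (fun mm : 'X_{1..n} => mm i') e2; rewrite !mnmE => e.
  have -> : lift ord_max i' = widen_ord (leqnSn _) i' by apply/val_inj => /=; rewrite /bump leqNgt ltn_ord.
  by rewrite e.
case: eqP => _ /=; last by rewrite mulr0 mcoeff0 mulr0.
by rewrite mulr1 mcoeffZ mcoeffX.
Qed.

Lemma mpoly_allroot_eq0 (R : realType) n (p : {mpoly R[n]}) :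
  (forall v, p.@[v] = 0) -> p = 0.
Proof.
elim: n p => [|n IH] p h.
  have X0 m : 'X_[m] = 1 :> {mpoly R[0]}.
    have -> : m = 0%MM by apply/mnmP => -[].
    exact: mpolyX0.
  have := h (fun _ => 0); rewrite mevalE => e.
  rewrite {1}(mpolyE p).
  transitivity ((\sum_(m <- msupp p) p@_m) *: (1 : {mpoly R[0]})).
    by rewrite scaler_suml; apply: eq_bigr => m _; rewrite X0.
  have -> : \sum_(m <- msupp p) p@_m = 0.
    by rewrite -[RHS]e; apply: eq_bigr => m _; rewrite big_ord0 mulr1.
  by rewrite scale0r.
have [X EX] : exists X, muni p = mmap (polyC \o @mpolyC _ _) X p.
  by eexists; rewrite /muni /=; reflexivity.
have Z : forall v : 'I_n -> R, map_poly (meval v) (muni p) = 0.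
  move=> v; apply: poly_allroot_eq0 => t.
  have := mmap_rmorph (polyC \o @mpolyC _ _) X (horner_eval t \o map_poly (meval v)) p.
  rewrite -EX /= horner_evalE => ->.
  rewrite (@eq_mmap _ _ _ _ idfun); first exact: h.
  move=> c /=; rewrite map_polyC horner_evalE hornerC; exact: mevalC.
apply/mpolyP => m; rewrite mcoeff0 -muni_coef.
have -> : (muni p)`_(m ord_max) = 0; last by rewrite mcoeff0.
apply: IH => v; have := congr1 (fun q : {poly R} => q`_(m ord_max)) (Z v).
by rewrite coef_map /= coef0.
Qed.


Definition Kmx (R : comNzRingType) n m r (A : 'M[R]_(n,m)) (P : 'M_(r,n)) (Q : 'M_(m,r)) : 'M_n :=
  (\det (P *m A *m Q))%:M - A *m Q *m \adj (P *m A *m Q) *m P.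

Lemma pointwise (F : fieldType) n m r (A : 'M[F]_(n,m)) (P : 'M_(r,n)) (Q : 'M_(m,r)) :
  (\rank A <= r)%N -> (P *m A *m Q) \in unitmx ->
  Kmx A P Q *m A = 0 /\ (kermx A <= Kmx A P Q)%MS.
Proof.
move=> rA uS; set S := P *m A *m Q.
have dS : \det S != 0 by rewrite -unitfE -unitmxE.
have sPA : (P *m A <= A)%MS by exact: submxMl.
have rPA : (\rank A <= \rank (P *m A))%N.
  apply: leq_trans rA _; rewrite -{1}(mxrank_unit uS); exact: mxrankM_maxl.
have sAPA : (A <= P *m A)%MS.
  by have := mxrank_leqif_sup sPA; case=> _ <-; rewrite eqn_leq rPA mxrankS.
case/submxP: sAPA => T eT.
split.
  rewrite /Kmx mulmxBl mul_scalar_mx.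
  have -> : A *m Q *m \adj S *m P *m A = \det S *: A.
    rewrite {1}eT.
    have -> : T *m (P *m A) *m Q = T *m S by rewrite -mulmxA.
    rewrite -(mulmxA T S) mul_mx_adj mul_mx_scalar -!scalemxAl -mulmxA -eT //.
  by rewrite subrr.
have E : kermx A *m Kmx A P Q = \det S *: kermx A.
  rewrite /Kmx mulmxBr mul_mx_scalar !mulmxA mulmx_ker !mul0mx subr0 //.
rewrite -[kermx A](scalerK dS) -E.
by apply: scalemx_sub; apply: submxMl.
Qed.

Lemma sel_free (F : fieldType) n m (A : 'M[F]_(n,m)) r : \rank A = r ->
  exists f : 'I_r -> 'I_n, row_free (rowsub f A).
Proof. by move=> <-; exists (maxrankfun A); exact: maxrowsub_free. Qed.

Lemma sel_exists (F : fieldType) n m (A : 'M[F]_(n,m)) r : \rank A = r ->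
  exists (f : 'I_r -> 'I_n) (g : 'I_r -> 'I_m),
    (rowsub f 1%:M *m A *m colsub g 1%:M) \in unitmx.
Proof.
move=> rA; have [f ff] := sel_free rA.
have rA1 : \rank (rowsub f A)^T = r by rewrite mxrank_tr; exact/eqP.
have [g fg] := sel_free rA1.
exists f, g; rewrite -row_free_unit -rowsubE mulmx_colsub mulmx1.
have -> : (colsub g (rowsub f A)) = (rowsub g (rowsub f A)^T)^T.
  by apply/matrixP => i j; rewrite !mxE.
by rewrite /row_free mxrank_tr.
Qed.

Lemma map_Kmx (S T : comNzRingType) (f : {rmorphism S -> T}) n m r
  (A : 'M[S]_(n,m)) (P : 'M_(r,n)) (Q : 'M_(m,r)) :
  map_mx f (Kmx A P Q) = Kmx (map_mx f A) (map_mx f P) (map_mx f Q).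
Proof. by rewrite /Kmx map_mxB !map_mxM map_scalar_mx -det_map_mx map_mx_adj !map_mxM. Qed.


Section Hom.
Variables (R : comNzRingType) (d : nat).
Definition homx n m k (M : 'M[{mpoly R[d]}]_(n,m)) := forall i j, M i j \is k.-homog.

Lemma homx_eq n m k1 k2 (M : 'M_(n,m)) : k1 = k2 -> homx k1 M -> homx k2 M.
Proof. by move=> ->. Qed.

Lemma homx_mul n m p k1 k2 (M : 'M_(n,m)) (N : 'M_(m,p)) :
  homx k1 M -> homx k2 N -> homx (k1 + k2) (M *m N).
Proof.
move=> hM hN i j; rewrite mxE; apply: rpred_sum => l _.
exact: dhomogM.
Qed.

Lemma homx_mul0 n p k (M : 'M_(n,0)) (N : 'M_(0,p)) : homx k (M *m N).
Proof. by move=> i j; rewrite mxE big_ord0 dhomog0. Qed.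

Lemma homog_prod (I : Type) (s : seq I) (F : I -> {mpoly R[d]}) k :
  (forall i, F i \is k.-homog) -> \prod_(i <- s) F i \is (size s * k).-homog.
Proof.
move=> hF; elim: s => [|x s IH]; first by rewrite big_nil mul0n dhomog1.
by rewrite big_cons mulSn; apply: dhomogM.
Qed.

Lemma homog_prod_ord r (F : 'I_r -> {mpoly R[d]}) k :
  (forall i, F i \is k.-homog) -> \prod_(i < r) F i \is (r * k).-homog.
Proof.
elim: r F => [|r IH] F hF; first by rewrite big_ord0 mul0n dhomog1.
by rewrite big_ord_recr mulSnr; apply: dhomogM; [apply: IH => i|]; apply: hF.
Qed.

Lemma homog_sign (b : nat) : ((-1) ^+ b : {mpoly R[d]}) \is 0.-homog.
Proof.
have h : (-1 : {mpoly R[d]}) \is 0.-homog by rewrite rpredN dhomog1.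
by have := dhomogMn b h; rewrite mul0n.
Qed.

Lemma homx_det r k (M : 'M_r) : homx k M -> \det M \is (r * k).-homog.
Proof.
move=> hM; rewrite /determinant; apply: rpred_sum => s _.
rewrite -[(r * k)%N]add0n; apply: dhomogM; first exact: homog_sign.
exact: homog_prod_ord.
Qed.

Lemma homx_adj r k (M : 'M_r.+1) : homx k M -> homx (r * k) (\adj M).
Proof.
move=> hM i j; rewrite mxE /cofactor -[(r * k)%N]add0n; apply: dhomogM.
  exact: homog_sign.
by apply: homx_det => a b; rewrite !mxE.
Qed.

Lemma homx_scalar n k (a : {mpoly R[d]}) : a \is k.-homog -> homx k (a%:M : 'M_n).
Proof. by move=> ha i j; rewrite mxE rpredMn. Qed.

Lemma homx_sel n r (f : 'I_r -> 'I_n) : homx 0 (rowsub f 1%:M).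
Proof. by move=> i j; rewrite !mxE rpredMn // dhomog1. Qed.

Lemma homx_selc n r (f : 'I_r -> 'I_n) : homx 0 (colsub f 1%:M).
Proof. by move=> i j; rewrite !mxE rpredMn // dhomog1. Qed.

Lemma homx_tr n m k (M : 'M_(n,m)) : homx k M -> homx k M^T.
Proof. by move=> h i j; rewrite mxE. Qed.
End Hom.


Section Main.
Variables (R : realType) (d : nat).
Local Notation ev xi := (@mmap d R _ (real_complex R) xi).

Lemma csymbolE n m (A : symbol R d n m) xi : csymbol A xi = map_mx (ev xi) A.
Proof. by apply/matrixP=> i j; rewrite !mxE. Qed.

Lemma ev_real (x : 'I_d -> R) (p : {mpoly R[d]}) : ev (fun i => (x i)%:C)%C p = ((p.@[x])%:C)%C.
Proof. by rewrite /meval (mmap_rmorph _ _ (real_complex R)). Qed.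

Lemma ev_allzero (p : {mpoly R[d]}) : (forall xi, ev xi p = 0) -> p = 0.
Proof.
move=> h; apply: mpoly_allroot_eq0 => v; apply: (@complexI R).
by rewrite -ev_real h rmorph0.
Qed.

Lemma evX (xi : 'I_d -> complex R) i : ev xi 'X_i = xi i.
Proof. by rewrite mmapX mmap1U. Qed.

Lemma evM (xi : 'I_d -> complex R) p q : ev xi (p * q) = ev xi p * ev xi q.
Proof. exact: rmorphM. Qed.

Lemma generic (hd : (0 < d)%N) (D : {mpoly R[d]}) : D != 0 ->
  exists xi, xi <> (fun _ => 0) /\ ev xi D != 0.
Proof.
move=> nD; set i0 : 'I_d := Ordinal hd.
have nX : ('X_i0 : {mpoly R[d]}) != 0.
  apply/eqP => h; have := congr1 (meval (fun _ => (1 : R))) h.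
  by rewrite mevalXU meval0 => /eqP; rewrite oner_eq0.
have nP : D * 'X_i0 != 0 by rewrite mulf_neq0.
case: (classic (exists xi, ev xi (D * 'X_i0) != 0)) => [[xi hxi]|nex]; last first.
  by case/eqP: nP; apply: ev_allzero => xi; apply/eqP; apply/negPn/negP => h; apply: nex; exists xi.
move: hxi; rewrite evM evX mulf_eq0 negb_or => /andP[h1 h2].
exists xi; split => // e; move: h2; rewrite e eqxx //.
Qed.

Lemma vanish (hd : (0 < d)%N) (D e : {mpoly R[d]}) : D != 0 ->
  (forall xi, xi <> (fun _ => 0) -> ev xi D != 0 -> ev xi e = 0) -> e = 0.
Proof.
move=> nD h; apply/eqP/negPn/negP => ne.
have [xi [nxi]] := generic hd (mulf_neq0 ne nD).
rewrite evM mulf_eq0 negb_or => /andP[h1 h2].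
by move: h1; rewrite h // eqxx.
Qed.

Definition Psel n r (f : {ffun 'I_r -> 'I_n}) : 'M[{mpoly R[d]}]_(r,n) := rowsub f 1%:M.
Definition Qsel m r (g : {ffun 'I_r -> 'I_m}) : 'M[{mpoly R[d]}]_(m,r) := colsub g 1%:M.
Definition Kf n m r (A : symbol R d n m)
  (fg : {ffun 'I_r -> 'I_n} * {ffun 'I_r -> 'I_m}) : 'M_n :=
  if \det (Psel fg.1 *m A *m Qsel fg.2) == 0 then 0
  else Kmx A (Psel fg.1) (Qsel fg.2).

Lemma map_Psel xi n r (f : 'I_r -> 'I_n) :
  map_mx (ev xi) (Psel [ffun i => f i]) = rowsub f 1%:M.
Proof. by apply/matrixP => i j; rewrite !mxE ffunE rmorphMn rmorph1. Qed.

Lemma map_Qsel xi m r (g : 'I_r -> 'I_m) :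
  map_mx (ev xi) (Qsel [ffun i => g i]) = colsub g 1%:M.
Proof. by apply/matrixP => i j; rewrite !mxE ffunE rmorphMn rmorph1. Qed.

Lemma Kf_A (hd : (0 < d)%N) n m r (A : symbol R d n m) :
  (forall xi, xi <> (fun _ => 0) -> \rank (csymbol A xi) = r) ->
  forall fg : {ffun 'I_r -> 'I_n} * {ffun 'I_r -> 'I_m}, Kf A fg *m A = 0.
Proof.
move=> hr fg; rewrite /Kf; case: eqP => [_|/eqP nD]; first by rewrite mul0mx.
apply/matrixP => i j; rewrite [in RHS]mxE; apply: (vanish hd nD) => xi nxi nDx.
transitivity (map_mx (ev xi) (Kmx A (Psel fg.1) (Qsel fg.2) *m A) i j).
  by rewrite [RHS]mxE.
have rA : (\rank (map_mx (ev xi) A) <= r)%N by rewrite -csymbolE hr.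
have uS : map_mx (ev xi) (Psel fg.1) *m map_mx (ev xi) A *m map_mx (ev xi) (Qsel fg.2) \in unitmx.
  by rewrite unitmxE unitfE -!map_mxM det_map_mx.
by rewrite map_mxM map_Kmx; have [-> _] := pointwise rA uS; rewrite mxE.
Qed.

Lemma homx_sub n m k (M N : 'M[{mpoly R[d]}]_(n,m)) : homx k M -> homx k N -> homx k (M - N).
Proof. by move=> hM hN i j; rewrite !mxE rpredB. Qed.

Lemma homx_Kmx n m r k (A : 'M[{mpoly R[d]}]_(n,m)) (P : 'M_(r,n)) (Q : 'M_(m,r)) :
  homx k A -> homx 0 P -> homx 0 Q -> homx (r * k) (Kmx A P Q).
Proof.
move=> hA hP hQ; have hS : homx k (P *m A *m Q).
  by apply: (homx_eq (k1 := (0 + k) + 0)%N); [rewrite addn0|apply: homx_mul => //; apply: homx_mul].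
apply: homx_sub; first by apply: homx_scalar; apply: homx_det.
case: r P Q hP hQ hS => [|r] P Q hP hQ hS; first exact: homx_mul0.
apply: (homx_eq (k1 := (k + 0) + r * k + 0)%N); first by rewrite !addn0 mulSn.
apply: homx_mul => //; apply: homx_mul; last exact: homx_adj.
exact: homx_mul.
Qed.

Lemma kernel_symbol (hd : (0 < d)%N) n m k r (A : symbol R d n m) :
  homx k A ->
  (forall xi, xi <> (fun _ => 0) -> \rank (csymbol A xi) = r) ->
  exists p (B : symbol R d p n), [/\ homx (r * k) B, B *m A = 0 &
     forall xi, xi <> (fun _ => 0) -> (csymbol B xi == kermx (csymbol A xi))%MS].
Proof.
move=> hk hr.
pose T := ({ffun 'I_r -> 'I_n} * {ffun 'I_r -> 'I_m} * 'I_n)%type.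
pose B : symbol R d #|{: T}| n :=
  \matrix_(t, j) Kf A (enum_val t).1 (enum_val t).2 j.
exists #|{: T}|, B.
have BA : B *m A = 0.
  apply/matrixP => t j; rewrite [in RHS]mxE.
  have := congr1 (fun M : 'M[{mpoly R[d]}]_(n,m) => M (enum_val t).2 j) (Kf_A hd hr (enum_val t).1).
  rewrite [in RHS]mxE => <-; rewrite !mxE; apply: eq_bigr => l _; rewrite mxE.
  done.
split => //.
- move=> t j; rewrite mxE /Kf; case: eqP => _; first by rewrite mxE dhomog0.
  apply: homx_Kmx => //; [exact: homx_sel|exact: homx_selc].
move=> xi nxi; rewrite !csymbolE; apply/andP; split.
  by rewrite sub_kermx -map_mxM BA map_mx0.
have [f [g u]] := sel_exists (hr xi nxi); rewrite csymbolE in u.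
pose fg := ([ffun i => f i], [ffun i => g i]).
have nD : \det (Psel fg.1 *m A *m Qsel fg.2) != 0.
  apply/eqP => h; move: u; rewrite unitmxE unitfE -(map_Psel xi f) -(map_Qsel xi g).
  by rewrite -!map_mxM det_map_mx h rmorph0 eqxx.
have rA : (\rank (map_mx (ev xi) A) <= r)%N by rewrite -csymbolE hr.
have [_ sK] := pointwise rA u.
apply: submx_trans sK _.
rewrite -(map_Psel xi f) -(map_Qsel xi g) -map_Kmx.
apply/row_subP => i.
have -> : row i (map_mx (ev xi) (Kmx A (Psel [ffun i => f i]) (Qsel [ffun i => g i])))
   = row (enum_rank ((fg, i) : T)) (map_mx (ev xi) B).
  have eK : Kf A fg = Kmx A (Psel [ffun i => f i]) (Qsel [ffun i => g i]).
    by rewrite /Kf (negbTE nD).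
  have key t j : B t j = Kf A (enum_val t).1 (enum_val t).2 j by rewrite mxE.
  apply/rowP => j; rewrite [LHS]mxE [LHS]mxE [RHS]mxE [RHS]mxE key enum_rankK /=.
  by rewrite eK.
exact: row_sub.
Qed.

Lemma csymbol_tr n m (A : symbol R d n m) xi : csymbol A^T xi = (csymbol A xi)^T.
Proof. by apply/matrixP => i j; rewrite !mxE. Qed.

Lemma image_symbol (hd : (0 < d)%N) n m k r (A : symbol R d n m) :
  homx k A ->
  (forall xi, xi <> (fun _ => 0) -> \rank (csymbol A xi) = r) ->
  exists q (Q : symbol R d m q), [/\ homx (r * k) Q, A *m Q = 0 &
     forall xi, xi <> (fun _ => 0) -> (csymbol A xi == kermx (csymbol Q xi))%MS].
Proof.
move=> hk hr.
have hrT xi : xi <> (fun _ => 0) -> \rank (csymbol A^T xi) = r.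
  by move=> nxi; rewrite csymbol_tr mxrank_tr hr.
have [p [B [hB BA hE]]] := kernel_symbol hd (homx_tr hk) hrT.
exists p, B^T; split; first exact: homx_tr.
  by rewrite -[A]trmxK -trmx_mul BA trmx0.
move=> xi nxi; have := hE xi nxi; rewrite csymbol_tr csymbol_tr.
set M := csymbol A xi; set C := csymbol B xi => eC.
have sCK : (C <= kermx M^T)%MS by case/andP: eC.
have sMK : (M <= kermx C^T)%MS.
  by rewrite sub_kermx -[M]trmxK -trmx_mul (sub_kermxP sCK) trmx0.
have [_ <-] := mxrank_leqif_eq sMK.
rewrite mxrank_ker mxrank_tr (eqmx_rank eC) mxrank_ker mxrank_tr subKn //.
exact: rank_leq_col.
Qed.

Lemma maxpoint (hd : (0 < d)%N) n m (M : symbol R d n m) :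
  exists xi0, xi0 <> (fun _ => 0) /\ forall xi, xi <> (fun _ => 0) ->
    (\rank (csymbol M xi) <= \rank (csymbol M xi0))%N.
Proof.
suff H : forall k xi0, xi0 <> (fun _ => 0) ->
    (n - \rank (csymbol M xi0) <= k)%N ->
  exists xi0, xi0 <> (fun _ => 0) /\ forall xi, xi <> (fun _ => 0) ->
    (\rank (csymbol M xi) <= \rank (csymbol M xi0))%N.
  apply: (H n (fun _ => 1)); last exact: leq_subr.
  move=> e; have := congr1 (fun h => h (Ordinal hd)) e => /= /eqP; by rewrite oner_eq0.
elim => [|k IH] xi0 nx0 hk.
  exists xi0; split => // xi _; apply: leq_trans (rank_leq_row _) _.
  by rewrite -subn_eq0 -leqn0.
case: (classic (forall xi, xi <> (fun _ => 0) ->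
    (\rank (csymbol M xi) <= \rank (csymbol M xi0))%N)) => [h|h].
  by exists xi0.
have [xi1 h1] := not_all_ex_not _ _ h.
have [nx1 lt1] : xi1 <> (fun _ => 0) /\ ~~ (\rank (csymbol M xi1) <= \rank (csymbol M xi0))%N.
  split; first by move=> e; apply: h1 => e'.
  by apply/negP => l; apply: h1.
apply: (IH xi1 nx1).
have := rank_leq_row (csymbol M xi1); move: lt1 hk; rewrite -ltnNge.
lia.
Qed.

Lemma lowerpoly n m (M : symbol R d n m) xi0 r : \rank (csymbol M xi0) = r ->
  exists D : {mpoly R[d]}, D != 0 /\ forall xi, ev xi D != 0 ->
    (r <= \rank (csymbol M xi))%N.
Proof.
move=> er; have [f [g u]] := sel_exists er.
exists (\det (Psel [ffun i => f i] *m M *m Qsel [ffun i => g i])); split.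
  apply/eqP => h; move: u; rewrite csymbolE unitmxE unitfE -(map_Psel xi0 f) -(map_Qsel xi0 g).
  by rewrite -!map_mxM det_map_mx h rmorph0 eqxx.
move=> xi nD.
have u2 : rowsub f 1%:M *m csymbol M xi *m colsub g 1%:M \in unitmx.
  by rewrite csymbolE unitmxE unitfE -(map_Psel xi f) -(map_Qsel xi g) -!map_mxM det_map_mx.
rewrite -{1}(mxrank_unit u2).
apply: leq_trans (mxrankM_maxl _ _) _; exact: mxrankM_maxr.
Qed.
End Main.

Theorem theorem2p6 (R : realType) (d n m : nat) (A : symbol R d n m) :
  homogeneous_symbol A ->
  ((exists r : nat, forall xi : 'I_d -> complex R,
      xi <> (fun _ => 0) -> \rank (csymbol A xi) = r)
   <->
   (exists (p q : nat) (B : symbol R d p n) (Q : symbol R d m q),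
      [/\ homogeneous_symbol B, homogeneous_symbol Q,
          B *m A = 0, A *m Q = 0 &
          forall xi : 'I_d -> complex R, xi <> (fun _ => 0) ->
            (csymbol B xi == kermx (csymbol A xi))%MS /\
            (csymbol A xi == kermx (csymbol Q xi))%MS])).
Proof.
move=> [k hk].
have [d0|hd] := posnP d.
  subst d.
  have allz (xi : 'I_0 -> complex R) : xi = (fun _ => 0).
    by apply: FunctionalExtensionality.functional_extensionality => -[].
  split => _.
    exists 0, 0, (0 : symbol R 0 0 n), (0 : symbol R 0 m 0); split.
    - by exists 0%N => i j; rewrite mxE dhomog0.
    - by exists 0%N => i j; rewrite mxE dhomog0.
    - by apply/matrixP => -[].
    - by apply/matrixP => i -[].
    by move=> xi nxi; case: nxi; exact: allz.
  by exists 0%N => xi nxi; case: nxi; exact: allz.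
split.
  move=> [r hr].
  have [p [B [hB BA hBE]]] := kernel_symbol hd hk hr.
  have [q [Q [hQ AQ hQE]]] := image_symbol hd hk hr.
  exists p, q, B, Q; split => //; [by exists (r * k)%N|by exists (r * k)%N|].
  by move=> xi nxi; split; [exact: hBE|exact: hQE].
move=> [p [q [B [Q [_ _ BA AQ hE]]]]].
have [xa [nxa ha]] := maxpoint hd A.
have [xb [nxb hb]] := maxpoint hd B.
have [Da [nDa hDa]] := lowerpoly (erefl (\rank (csymbol A xa))).
have [Db [nDb hDb]] := lowerpoly (erefl (\rank (csymbol B xb))).
have [xs [nxs]] := generic hd (mulf_neq0 nDa nDb).
rewrite evM mulf_eq0 negb_or => /andP[h1 h2].
have e xi : xi <> (fun _ => 0) ->
    (\rank (csymbol B xi) + \rank (csymbol A xi))%N = n.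
  move=> nxi; have [/eqmx_rank -> _] := hE xi nxi.
  by rewrite mxrank_ker subnK // rank_leq_row.
exists (\rank (csymbol A xa)) => xi nxi.
have := ha xi nxi; have := hDa xs h1; have := ha xs nxs; have := hb xs nxs.
have := hDb xs h2; have := e xi nxi; have := e xs nxs; have := hb xi nxi.
lia.
Qed.
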